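(* There exist domains $D_1$ and $D_2$ in $\mathbb{R}^2$ with $D_1\subset D_2$, such that $\mathbb{R}^2\setminus D_2$ contains at least two points, and a point $z\in D_1$ such that $$\lambda_{D_2}(z)=\lambda''_{D_2}(z)=\lambda'_{D_2}(z)>\lambda'_{D_1}(z)>\lambda''_{D_1}(z).$$ In particular $\lambda'_{D_2}(z)>\lambda'_{D_1}(z)$ and $\lambda''_{D_2}(z)>\lambda''_{D_1}(z)$.
   Context: Write $d(z,\partial D)=\inf\{|z-a|:a\in\partial D\}$ and $Q(z;a,b)=|z-a|\big(1+\big|\log\frac{|a-b|}{|z-a|}\big|\big)$ (equal to $+\infty$ when $a=b$). For a domain $D\subset\mathbb{R}^2$ whose complement contains at least two points and $z\in D$ define $1/\lambda_D(z)=\inf\{Q(z;a,b): a,b\in\mathbb{R}^2\setminus D\}$, $1/\lambda'_D(z)=\inf\{Q(z;a,b): a,b\in\partial D\}$, $1/\lambda''_D(z)=\inf\{Q(z;a,b): a,b\in\partial D,\ |z-a|=d(z,\partial D)\}$. *)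

(* Defs.v *)
From Stdlib Require Import Reals ClassicalEpsilon.
From Coquelicot Require Import Coquelicot.
Open Scope R_scope.

Definition pt := (R * R)%type.

Definition dist2 (z a : pt) : R :=
  sqrt ((fst z - fst a) ^ 2 + (snd z - snd a) ^ 2).

Definition open2 (D : pt -> Prop) : Prop :=
  forall z, D z -> exists eps, 0 < eps /\ forall w, dist2 z w < eps -> D w.

Definition connected2 (D : pt -> Prop) : Prop :=
  forall U V : pt -> Prop, open2 U -> open2 V ->
    (forall z, D z -> U z \/ V z) ->
    (forall z, D z -> U z -> V z -> False) ->
    (exists z, D z /\ U z) -> (exists z, D z /\ V z) -> False.

Definition domain2 (D : pt -> Prop) : Prop :=
  (exists z, D z) /\ open2 D /\ connected2 D.

Definition boundary2 (D : pt -> Prop) (a : pt) : Prop :=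
  forall eps, 0 < eps ->
    (exists w, dist2 a w < eps /\ D w) /\ (exists w, dist2 a w < eps /\ ~ D w).

Definition dist_bd (D : pt -> Prop) (z : pt) : Rbar :=
  Rbar_glb (fun q => exists a, boundary2 D a /\ q = Finite (dist2 z a)).

Definition Qf (z a b : pt) : Rbar :=
  if excluded_middle_informative (a = b) then p_infty
  else Finite (dist2 z a * (1 + Rabs (ln (dist2 a b / dist2 z a)))).

Definition lam (D : pt -> Prop) (z : pt) : Rbar :=
  Rbar_inv (Rbar_glb (fun q => exists a b, ~ D a /\ ~ D b /\ q = Qf z a b)).

Definition lam' (D : pt -> Prop) (z : pt) : Rbar :=
  Rbar_inv (Rbar_glb (fun q => exists a b, boundary2 D a /\ boundary2 D b /\ q = Qf z a b)).

Definition lam'' (D : pt -> Prop) (z : pt) : Rbar :=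
  Rbar_inv (Rbar_glb (fun q => exists a b, boundary2 D a /\ boundary2 D b /\
     Finite (dist2 z a) = dist_bd D z /\ q = Qf z a b)).

(* Main.v *)
Require Import Defs.
From Stdlib Require Import Reals Lra Psatz Classical ClassicalEpsilon.
From Coquelicot Require Import Coquelicot.
Open Scope R_scope.

Lemma d_nn a b : 0 <= dist2 a b.
Proof. apply sqrt_pos. Qed.

Lemma d_sq a b : dist2 a b * dist2 a b = (fst a - fst b)^2 + (snd a - snd b)^2.
Proof. unfold dist2. apply sqrt_sqrt. apply Rplus_le_le_0_compat; apply pow2_ge_0. Qed.

Ltac dfacts a b := pose proof (d_nn a b); pose proof (d_sq a b).

Lemma d_sym a b : dist2 a b = dist2 b a.
Proof. unfold dist2. f_equal. ring. Qed.

Lemma d_tri a b c : dist2 a c <= dist2 a b + dist2 b c.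
Proof.
  dfacts a c; dfacts a b; dfacts b c.
  set (X := dist2 a b) in *. set (Y := dist2 b c) in *. set (Z := dist2 a c) in *. clearbody X Y Z.
  destruct a as [a1 a2], b as [b1 b2], c as [c1 c2]; cbn [fst snd] in *.
  assert (HXY: (a1-b1)*(b1-c1) + (a2-b2)*(b2-c2) <= X*Y).
  { assert (0 <= X*Y) by nra.
    assert (((a1-b1)*(b1-c1) + (a2-b2)*(b2-c2))^2 <= (X*Y)^2).
    { replace ((X*Y)^2) with ((X*X)*(Y*Y)) by ring. rewrite H2, H4.
      pose proof (pow2_ge_0 ((a1-b1)*(b2-c2) - (a2-b2)*(b1-c1))). nra. }
    nra. }
  assert (Z*Z <= (X+Y)*(X+Y)) by nra.
  nra.
Qed.

Lemma sq0 x : x^2 <= 0 -> x = 0.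
Proof. intro H. destruct (Rtotal_order x 0) as [h|[h|h]]; [nra|exact h|nra]. Qed.

Lemma d_pos a b : a <> b -> 0 < dist2 a b.
Proof.
  intro H. dfacts a b. destruct (Req_dec (dist2 a b) 0) as [E|E]; [|lra].
  exfalso. apply H. rewrite E in H1. destruct a as [a1 a2], b as [b1 b2]; cbn [fst snd] in *.
  assert (a1 - b1 = 0) by (apply sq0; pose proof (pow2_ge_0 (a2-b2)); lra).
  assert (a2 - b2 = 0) by (apply sq0; pose proof (pow2_ge_0 (a1-b1)); lra).
  assert (a1 = b1) by lra. assert (a2 = b2) by lra. subst; reflexivity.
Qed.

Lemma d_eq a b d : 0 <= d -> d * d = (fst a - fst b)^2 + (snd a - snd b)^2 -> dist2 a b = d.
Proof. intros. unfold dist2. apply sqrt_lem_1; nra. Qed.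

Lemma ln_le1 x : 0 < x -> ln x <= x - 1.
Proof. intro. pose proof (exp_ineq1_le (ln x)). rewrite exp_ln in H0; lra. Qed.

Lemma ln_ge1 x : 0 < x -> 1 - / x <= ln x.
Proof. intro. pose proof (ln_le1 (/x)). rewrite ln_Rinv in H0 by lra.
  assert (0 < /x) by (apply Rinv_0_lt_compat; lra). specialize (H0 H1). lra. Qed.

Lemma Q_ge z a b L :
  (a <> b -> 0 < dist2 z a /\
     (L <= dist2 z a \/ L * dist2 a b <= 2 * dist2 z a * dist2 a b - dist2 z a ^ 2
      \/ L <= 2 * dist2 z a - dist2 a b)) ->
  Rbar_le (Finite L) (Qf z a b).
Proof.
  intro H. unfold Qf. destruct (excluded_middle_informative (a = b)) as [E|E]; simpl; [trivial|].
  destruct (H E) as [Hr Hc]. pose proof (d_pos _ _ E) as Hs.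
  set (r := dist2 z a) in *. set (s := dist2 a b) in *.
  assert (0 < s / r) by (apply Rdiv_lt_0_compat; lra).
  pose proof (ln_le1 _ H0). pose proof (ln_ge1 _ H0).
  pose proof (Rle_abs (ln (s/r))). pose proof (Rabs_pos (ln (s/r))).
  pose proof (Rabs_Ropp (ln (s/r))). pose proof (Rle_abs (- ln (s/r))).
  assert (/ (s/r) = r / s) by (field; lra).
  rewrite H7 in H2.
  assert (r * (s/r) = s) by (field; lra).
  assert (r * (r/s) * s = r^2) by (field; lra).
  set (l := ln (s/r)) in *. set (A := Rabs l) in *. clearbody A l r s.
  destruct Hc as [Hc|[Hc|Hc]].
  - nra.
  - assert (r * (1 + A) >= r * (2 - r/s)) by nra.
    assert (L * s <= r * (2 - r/s) * s) by nra. nra.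
  - assert (r * (1 + A) >= r * (1 - l)) by nra. nra.
Qed.

Lemma Q_le_d z a b : Rbar_le (Finite (dist2 z a)) (Qf z a b).
Proof. unfold Qf. destruct (excluded_middle_informative (a = b)); simpl; [trivial|].
  pose proof (Rabs_pos (ln (dist2 a b / dist2 z a))). pose proof (d_nn z a). nra. Qed.

Lemma glb_spec E : Rbar_is_glb E (Rbar_glb E).
Proof. unfold Rbar_glb. destruct (Rbar_ex_glb E); simpl; auto. Qed.

Lemma glb_lb E L : (forall x, E x -> Rbar_le (Finite L) x) -> Rbar_le (Finite L) (Rbar_glb E).
Proof. intro H. destruct (glb_spec E) as [_ H2]. apply H2. intros x Hx. auto. Qed.

Lemma glb_ub E x : E x -> Rbar_le (Rbar_glb E) x.
Proof. intro H. destruct (glb_spec E) as [H1 _]. apply H1; auto. Qed.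

Lemma glb_fin E L U : (forall x, E x -> Rbar_le (Finite L) x) -> E (Finite U) ->
  exists g, Rbar_glb E = Finite g /\ L <= g /\ g <= U.
Proof.
  intros H1 H2. pose proof (glb_lb E L H1). pose proof (glb_ub E _ H2).
  destruct (Rbar_glb E) as [g| |]; cbn [fst snd] in *; try contradiction. exists g; auto.
Qed.

Lemma glb_exact E L : (forall x, E x -> Rbar_le (Finite L) x) -> E (Finite L) ->
  Rbar_glb E = Finite L.
Proof. intros H1 H2. destruct (glb_fin E L L H1 H2) as [g [? [? ?]]]. rewrite H. f_equal; lra. Qed.

Lemma bd_notin D a : open2 D -> boundary2 D a -> ~ D a.
Proof.
  intros HO HB Ha. destruct (HO a Ha) as [e [He Hw]].
  destruct (HB e He) as [_ [w [Hd Hn]]]. apply Hn, Hw, Hd.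
Qed.

Definition P (x y : pt) (t : R) : pt :=
  (fst x + t * (fst y - fst x), snd x + t * (snd y - snd x)).

Lemma P0 x y : P x y 0 = x.
Proof. destruct x; unfold P; cbn [fst snd]; f_equal; ring. Qed.
Lemma P1 x y : P x y 1 = y.
Proof. destruct x, y; unfold P; cbn [fst snd]; f_equal; ring. Qed.

Lemma P_dist x y t s : dist2 (P x y t) (P x y s) = Rabs (t - s) * dist2 x y.
Proof.
  apply d_eq. pose proof (Rabs_pos (t-s)); pose proof (d_nn x y); nra.
  dfacts x y. unfold P; cbn [fst snd].
  replace (Rabs (t - s) * dist2 x y * (Rabs (t - s) * dist2 x y))
    with ((Rabs (t-s) * Rabs (t-s)) * (dist2 x y * dist2 x y)) by ring.
  rewrite H0, <- Rabs_mult, Rabs_right by (apply Rle_ge, Rle_0_sqr). ring.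
Qed.

Definition seg_ok (D : pt -> Prop) x y := forall t, 0 <= t <= 1 -> D (P x y t).

Lemma seg_prop (D U V : pt -> Prop) x y :
  open2 U -> open2 V -> (forall w, D w -> U w \/ V w) ->
  (forall w, D w -> U w -> V w -> False) ->
  seg_ok D x y -> U x -> U y.
Proof.
  intros OU OV Hc Hd Hs Ux.
  set (E := fun t => 0 <= t <= 1 /\ forall s, 0 <= s <= t -> U (P x y s)).
  assert (Eb : bound E) by (exists 1; intros t [Ht _]; lra).
  assert (E0 : E 0).
  { split; [lra|]. intros s Hs0. replace s with 0 by lra. rewrite P0; auto. }
  destruct (completeness E Eb (ex_intro _ 0 E0)) as [T [HT1 HT2]].
  assert (T0 : 0 <= T) by (apply HT1; auto).
  assert (T1 : T <= 1) by (apply HT2; intros t [Ht _]; lra).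
  assert (below : forall s, 0 <= s < T -> U (P x y s)).
  { intros s Hs1. destruct (classic (exists t, E t /\ s < t)) as [[t [[_ Ht] Hst]]|Hn].
    - apply Ht; lra.
    - exfalso. assert (T <= s). { apply HT2. intros t Et. destruct (Rle_lt_dec t s); auto.
        exfalso; apply Hn; eauto. } lra. }
  pose proof (d_nn x y) as Hdn. set (d := dist2 x y) in *.
  assert (DT : D (P x y T)) by (apply Hs; lra).
  destruct (Hc _ DT) as [UT|VT].
  - destruct (OU _ UT) as [e [He Hw]].
    set (del := e / (d + 1)).
    assert (Hdel : 0 < del) by (unfold del; apply Rdiv_lt_0_compat; lra).
    assert (near : forall s, Rabs (T - s) < del -> U (P x y s)).
    { intros s Hs'. apply Hw. rewrite P_dist. fold d.
      assert (del * (d+1) = e) by (unfold del; field; lra).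
      pose proof (Rabs_pos (T - s)). nra. }
    set (T' := Rmin 1 (T + del/2)).
    assert (ET' : E T').
    { split. unfold T'; split; [apply Rmin_glb; lra| apply Rmin_l].
      intros s Hs'. destruct (Rlt_le_dec s T). apply below; lra.
      apply near. assert (T' <= T + del/2) by apply Rmin_r.
      rewrite Rabs_left1 by lra. lra. }
    assert (T' <= T) by (apply HT1; auto).
    assert (T' = 1).
    { unfold T' in *. unfold Rmin in *. destruct (Rle_dec 1 (T + del/2)); lra. }
    rewrite <- P1 with (x := x). apply ET'. lra.
  - exfalso. destruct (OV _ VT) as [e [He Hw]].
    set (del := e / (d + 1)).
    assert (Hdel : 0 < del) by (unfold del; apply Rdiv_lt_0_compat; lra).
    destruct (Req_dec T 0) as [Tz|Tnz].
    + rewrite Tz, P0 in VT. apply (Hd x); auto. rewrite <- (P0 x y). apply Hs; lra.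
    + set (s := Rmax 0 (T - del/2)).
      assert (s < T) by (unfold s; apply Rmax_lub_lt; lra).
      assert (0 <= s) by apply Rmax_l.
      assert (T - del/2 <= s) by apply Rmax_r.
      apply (Hd (P x y s)). apply Hs; lra. apply below; lra.
      apply Hw. rewrite P_dist. fold d.
      assert (del * (d+1) = e) by (unfold del; field; lra).
      rewrite Rabs_right by lra. nra.
Qed.

Lemma seg_conn (D : pt -> Prop) c :
  D c ->
  (forall x, D x -> exists y1 y2, seg_ok D x y1 /\ seg_ok D y1 y2 /\ seg_ok D y2 c) ->
  connected2 D.
Proof.
  intros Dc Hp U V OU OV Hc Hd [u [Du Uu]] [v [Dv Vv]].
  assert (Hc' : forall w, D w -> V w \/ U w) by (intros w Hw; destruct (Hc w Hw); auto).
  assert (Hd' : forall w, D w -> V w -> U w -> False) by eauto.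
  destruct (Hp u Du) as [y1 [y2 [S1 [S2 S3]]]].
  assert (Uc : U c).
  { apply (seg_prop D U V y2 c); auto. apply (seg_prop D U V y1 y2); auto.
    apply (seg_prop D U V u y1); auto. }
  destruct (Hp v Dv) as [z1 [z2 [R1 [R2 R3]]]].
  assert (Vc : V c).
  { apply (seg_prop D V U z2 c); auto. apply (seg_prop D V U z1 z2); auto.
    apply (seg_prop D V U v z1); auto. }
  eauto.
Qed.

Lemma conn_axis (D : pt -> Prop) :
  (forall a b c, D (a,b) -> b*c >= b*b -> D (a,c)) ->
  (forall a b, 1 <= b*b -> D (a,b)) ->
  (forall b, D (0,b)) -> connected2 D.
Proof.
  intros Ha Hb Hc. apply (seg_conn D (0,0)); auto.
  intros [x1 x2] Dx.
  set (yt := if Rle_dec 0 x2 then x2 + 1 else x2 - 1).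
  assert (Hyt : (yt - x2 = 1 /\ 0 <= x2) \/ (yt - x2 = -1 /\ x2 < 0)).
  { unfold yt; destruct (Rle_dec 0 x2); [left|right]; split; lra. }
  assert (Hyt2 : 1 <= yt * yt) by (destruct Hyt as [[h1 h2]|[h1 h2]]; nra).
  clearbody yt.
  exists (x1, yt), (0, yt). split; [|split]; intros t Ht; unfold P; cbn [fst snd].
  - replace (x1 + t * (x1 - x1)) with x1 by ring. apply Ha with x2; auto.
    destruct Hyt as [[h1 h2]|[h1 h2]]; rewrite h1; nra.
  - replace (yt + t * (yt - yt)) with yt by ring. apply Hb; auto.
  - replace (0 + t * (0 - 0)) with 0 by ring. apply Hc.
Qed.

Definition m0 : pt := (1, 0).
Definition q0 : pt := (2, 0).
Definition z0 : pt := (0, 0).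
Definition D2 (w : pt) : Prop := w <> m0 /\ w <> q0.
Definition D1 (w : pt) : Prop := (fst w - 1)^2 + (snd w)^2 > 1/25 /\ w <> q0.

Lemma pair_neq (a b c d : R) : b <> d -> (a, b) <> (c, d).
Proof. intros H E. inversion E; auto. Qed.
Lemma pair_neq1 (a b c d : R) : a <> c -> (a, b) <> (c, d).
Proof. intros H E. inversion E; auto. Qed.

Lemma D2_conn : connected2 D2.
Proof.
  apply conn_axis.
  - intros a b c [H1 H2] Hbc. unfold D2, m0, q0 in *.
    destruct (Req_dec b 0) as [E|E].
    + subst b. split; intro E'; inversion E'; subst; auto.
    + assert (c <> 0) by (intro; subst; nra). split; apply pair_neq; auto.
  - intros a b H. unfold D2, m0, q0. assert (b <> 0) by (intro; subst; nra).
    split; apply pair_neq; auto.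
  - intros b. unfold D2, m0, q0. split; apply pair_neq1; lra.
Qed.

Lemma D1_conn : connected2 D1.
Proof.
  apply conn_axis.
  - intros a b c [H1 H2] Hbc. unfold D1, q0 in *; cbn [fst snd] in *.
    destruct (Req_dec b 0) as [E|E].
    + subst b. split. replace ((0:R)^2) with 0 in H1 by ring. pose proof (pow2_ge_0 c). lra.
      intro E'; inversion E'; subst; auto.
    + assert (c <> 0) by (intro; subst; nra). split. 
      assert (c*c >= b*b) by (destruct (Rlt_le_dec 0 b); nra).
      replace (c^2) with (c*c) by ring. replace (b^2) with (b*b) in H1 by ring. lra.
      apply pair_neq; auto.
  - intros a b H. unfold D1, q0; cbn [fst snd]. assert (b <> 0) by (intro; subst; nra).
    split. pose proof (pow2_ge_0 (a-1)). replace (b^2) with (b*b) by ring. lra. apply pair_neq; auto.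
  - intros b. unfold D1, q0; cbn [fst snd]. split. pose proof (pow2_ge_0 b). replace ((0-1)^2) with 1 by ring. lra. apply pair_neq1; lra.
Qed.

Lemma sq_gt x c : 0 <= x -> 0 <= c -> x*x > c*c -> x > c.
Proof. intros. destruct (Rle_lt_dec x c); auto. nra. Qed.
Lemma sq_lt x c : 0 <= x -> 0 <= c -> x*x < c*c -> x < c.
Proof. intros. destruct (Rle_lt_dec c x); auto. nra. Qed.

Lemma d_self a : dist2 a a = 0.
Proof. apply d_eq; [lra|]. ring. Qed.

Lemma bd_intro D a : ~ D a -> (forall e, 0 < e -> exists w, dist2 a w < e /\ D w) -> boundary2 D a.
Proof. intros Hn H e He. split; auto. exists a. rewrite d_self. auto. Qed.

Lemma d_vert x y h : 0 < h -> dist2 (x, y) (x, y + h) = h.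
Proof. intro. apply d_eq; [lra|]. cbn [fst snd]. ring. Qed.
Lemma d_horiz x y h : 0 < h -> dist2 (x, y) (x - h, y) = h.
Proof. intro. apply d_eq; [lra|]. cbn [fst snd]. ring. Qed.

Lemma dsm w : dist2 w m0 * dist2 w m0 = (fst w - 1)^2 + (snd w)^2.
Proof. rewrite d_sq. unfold m0; cbn [fst snd]. ring. Qed.

Lemma D2_open : open2 D2.
Proof.
  intros z [Hm Hq]. pose proof (d_pos _ _ Hm). pose proof (d_pos _ _ Hq).
  exists (Rmin (dist2 z m0) (dist2 z q0)). split. apply Rmin_glb_lt; auto.
  intros w Hw. pose proof (Rmin_l (dist2 z m0) (dist2 z q0)). pose proof (Rmin_r (dist2 z m0) (dist2 z q0)).
  split; intro E; subst w; lra.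
Qed.

Lemma D1_open : open2 D1.
Proof.
  intros z [Hm Hq]. pose proof (d_pos _ _ Hq).
  pose proof (d_nn z m0).
  assert (dist2 z m0 > 1/5) by (apply sq_gt; try lra; rewrite dsm; lra).
  exists (Rmin (dist2 z m0 - 1/5) (dist2 z q0)). split. apply Rmin_glb_lt; lra.
  intros w Hw. pose proof (Rmin_l (dist2 z m0 - 1/5) (dist2 z q0)). pose proof (Rmin_r (dist2 z m0 - 1/5) (dist2 z q0)).
  split.
  - pose proof (d_tri z w m0). pose proof (d_nn w m0).
    assert (dist2 w m0 > 1/5) by lra.
    rewrite <- dsm. nra.
  - intro E; subst w; lra.
Qed.

Lemma bd_D2 a : boundary2 D2 a -> a = m0 \/ a = q0.
Proof.
  intro H. pose proof (bd_notin _ _ D2_open H) as Hn. unfold D2 in Hn.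
  destruct (classic (a = m0)); auto. destruct (classic (a = q0)); auto. exfalso; auto.
Qed.

Lemma bd_D2_m : boundary2 D2 m0.
Proof.
  apply bd_intro. unfold D2; tauto.
  intros e He. exists (1, 0 + e/2). unfold m0. rewrite d_vert by lra. split. lra.
  unfold D2, m0, q0. split; apply pair_neq; lra.
Qed.

Lemma bd_D2_q : boundary2 D2 q0.
Proof.
  apply bd_intro. unfold D2; tauto.
  intros e He. exists (2, 0 + e/2). unfold q0. rewrite d_vert by lra. split. lra.
  unfold D2, m0, q0. split; apply pair_neq; lra.
Qed.

Definition a0 : pt := (4/5, 0).
Definition a1 : pt := (1, 1/5).

Lemma bd_D1 a : boundary2 D1 a -> (fst a - 1)^2 + (snd a)^2 = 1/25 \/ a = q0.
Proof.
  intro H. pose proof (bd_notin _ _ D1_open H) as Hn. unfold D1 in Hn.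
  destruct (classic (a = q0)); auto. left.
  assert (Hle : (fst a - 1)^2 + (snd a)^2 <= 1/25).
  { destruct (Rle_lt_dec ((fst a - 1)^2 + (snd a)^2) (1/25)); auto. exfalso; auto. }
  destruct (Req_dec ((fst a - 1)^2 + (snd a)^2) (1/25)) as [E|E]; auto. exfalso.
  pose proof (d_nn a m0).
  assert (dist2 a m0 < 1/5) by (apply sq_lt; try lra; rewrite dsm; lra).
  destruct (H (1/5 - dist2 a m0)) as [[w [Hw Dw]] _]. lra.
  destruct Dw as [Dw _].
  pose proof (d_tri w a m0). rewrite (d_sym w a) in H3.
  pose proof (d_nn w m0).
  assert (dist2 w m0 < 1/5) by lra.
  rewrite <- dsm in Dw. nra.
Qed.

Lemma bd_D1_a0 : boundary2 D1 a0.
Proof.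
  apply bd_intro. unfold D1, a0; cbn [fst snd]. intros [h _]. lra.
  intros e He. exists (4/5 - e/2, 0). unfold a0. rewrite d_horiz by lra. split. lra.
  unfold D1, q0; cbn [fst snd]. split. nra. apply pair_neq1; lra.
Qed.

Lemma bd_D1_a1 : boundary2 D1 a1.
Proof.
  apply bd_intro. unfold D1, a1; cbn [fst snd]. intros [h _]. lra.
  intros e He. exists (1, 1/5 + e/2). unfold a1. rewrite d_vert by lra. split. lra.
  unfold D1, q0; cbn [fst snd]. split. nra. apply pair_neq; lra.
Qed.

Lemma bd_D1_q : boundary2 D1 q0.
Proof.
  apply bd_intro. unfold D1; tauto.
  intros e He. exists (2, 0 + e/2). unfold q0. rewrite d_vert by lra. split. lra.
  unfold D1, q0; cbn [fst snd]. split. nra. apply pair_neq; lra.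
Qed.

Lemma D1_dom : domain2 D1.
Proof. split; [|split; [apply D1_open|apply D1_conn]]. exists z0. unfold D1, z0, q0; cbn [fst snd].
  split. lra. apply pair_neq1; lra. Qed.

Lemma D2_dom : domain2 D2.
Proof. split; [|split; [apply D2_open|apply D2_conn]]. exists z0. unfold D2, z0, m0, q0.
  split; apply pair_neq1; lra. Qed.
Lemma sq_le A B : 0 <= A -> 0 <= B -> A*A <= B*B -> A <= B.
Proof. intros. destruct (Rle_lt_dec A B); auto. nra. Qed.
Lemma key x y r s : (x-1)^2 + y^2 = 1/25 -> r*r = x^2+y^2 -> s*s = (x-2)^2+y^2 -> 0 <= r -> 0 <= s -> x < 1 ->
  101/100 * s <= 2*r*s - r^2.
Proof.
intros H1 H2 H3 Hr Hs Hx.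
assert (Hx1 : 4/5 <= x) by (pose proof (pow2_ge_0 y); nra).
assert (Er : r*r = 2*x - 24/25) by nra.
assert (Es : s*s = 76/25 - 2*x) by nra.
assert (Hr1 : 4/5 <= r) by nra.
assert (Hr2 : r <= 102/100) by nra.
assert (P : r^4 <= (52/25 - r^2)*(2*r - 101/100)^2).
{ assert (0 <= (r - 4/5) * (102/100 - r)) by nra. nra. }
assert (P2 : (r*r)*(r*r) <= (s*(2*r - 101/100))*(s*(2*r - 101/100))).
{ replace ((s*(2*r - 101/100))*(s*(2*r - 101/100))) with ((s*s)*(2*r - 101/100)^2) by ring.
  rewrite Es. replace (76/25 - 2*x) with (52/25 - r^2) by (replace (r^2) with (r*r) by ring; lra). nra. }
assert (0 <= s*(2*r - 101/100)) by nra.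
assert (r*r <= s*(2*r - 101/100)) by (apply sq_le; nra).
nra.
Qed.

Lemma d0 w : dist2 z0 w * dist2 z0 w = (fst w)^2 + (snd w)^2.
Proof. rewrite d_sq. unfold z0; cbn [fst snd]. ring. Qed.
Lemma dq w : dist2 w q0 * dist2 w q0 = (fst w - 2)^2 + (snd w)^2.
Proof. rewrite d_sq. unfold q0; cbn [fst snd]. ring. Qed.

Lemma d_z0m0 : dist2 z0 m0 = 1.
Proof. apply d_eq; [lra|]. unfold z0, m0; cbn [fst snd]. ring. Qed.
Lemma d_z0q0 : dist2 z0 q0 = 2.
Proof. apply d_eq; [lra|]. unfold z0, q0; cbn [fst snd]. field. Qed.
Lemma d_m0q0 : dist2 m0 q0 = 1.
Proof. apply d_eq; [lra|]. unfold q0, m0; cbn [fst snd]. field. Qed.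
Lemma d_z0a0 : dist2 z0 a0 = 4/5.
Proof. apply d_eq; [lra|]. unfold z0, a0; cbn [fst snd]. field. Qed.
Lemma d_a0q0 : dist2 a0 q0 = 6/5.
Proof. apply d_eq; [lra|]. unfold q0, a0; cbn [fst snd]. field. Qed.
Lemma d_a1q0 : dist2 a1 q0 = dist2 z0 a1.
Proof. unfold dist2, a1, q0, z0; cbn [fst snd]. f_equal. ring. Qed.
Lemma d_z0a1 : dist2 z0 a1 * dist2 z0 a1 = 26/25.
Proof. rewrite d0. unfold a1; cbn [fst snd]. field. Qed.

Lemma m0q0 : m0 <> q0.
Proof. unfold m0, q0. apply pair_neq1; lra. Qed.

Lemma Q_m0q0 : Qf z0 m0 q0 = Finite 1.
Proof.
  unfold Qf. destruct (excluded_middle_informative (m0 = q0)) as [E|_]. destruct (m0q0 E).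
  rewrite d_z0m0, d_m0q0. replace (1/1) with 1 by field. rewrite ln_1, Rabs_R0. f_equal; ring.
Qed.

Lemma a1q0 : a1 <> q0.
Proof. unfold a1, q0. apply pair_neq; lra. Qed.

Lemma Q_a1q0 : Qf z0 a1 q0 = Finite (dist2 z0 a1).
Proof.
  unfold Qf. destruct (excluded_middle_informative (a1 = q0)) as [E|_]. destruct (a1q0 E).
  rewrite d_a1q0. assert (0 < dist2 z0 a1) by (apply d_pos; unfold z0, a1; apply pair_neq1; lra).
  replace (dist2 z0 a1 / dist2 z0 a1) with 1 by (field; lra). rewrite ln_1, Rabs_R0. f_equal; ring.
Qed.

Lemma le_trans_fin L (r : R) x : L <= r -> Rbar_le (Finite r) x -> Rbar_le (Finite L) x.
Proof. intros H1 H2. apply Rbar_le_trans with (Finite r); auto. Qed.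

Lemma D2_lb a b : a = m0 \/ a = q0 -> Rbar_le (Finite 1) (Qf z0 a b).
Proof.
  intro H. apply le_trans_fin with (dist2 z0 a); [|apply Q_le_d].
  destruct H; subst; [rewrite d_z0m0|rewrite d_z0q0]; lra.
Qed.

Lemma lam_D2 : lam D2 z0 = Finite 1.
Proof.
  unfold lam. rewrite glb_exact with (L := 1).
  - simpl. f_equal. apply Rinv_1.
  - intros x [a [b [Ha [Hb ->]]]]. apply D2_lb.
    unfold D2 in Ha. destruct (classic (a = m0)); auto. destruct (classic (a = q0)); auto. tauto.
  - exists m0, q0. unfold D2. split; [tauto|split;[tauto|]]. rewrite Q_m0q0; auto.
Qed.

Lemma lam'_D2 : lam' D2 z0 = Finite 1.
Proof.
  unfold lam'. rewrite glb_exact with (L := 1).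
  - simpl. f_equal. apply Rinv_1.
  - intros x [a [b [Ha [Hb ->]]]]. apply D2_lb. apply bd_D2; auto.
  - exists m0, q0. split; [apply bd_D2_m|split;[apply bd_D2_q|]]. rewrite Q_m0q0; auto.
Qed.

Lemma distbd_D2 : dist_bd D2 z0 = Finite 1.
Proof.
  unfold dist_bd. apply glb_exact.
  - intros x [a [Ha ->]]. simpl. destruct (bd_D2 _ Ha); subst; [rewrite d_z0m0|rewrite d_z0q0]; lra.
  - exists m0. split; [apply bd_D2_m|]. rewrite d_z0m0; auto.
Qed.

Lemma lam''_D2 : lam'' D2 z0 = Finite 1.
Proof.
  unfold lam''. rewrite glb_exact with (L := 1).
  - simpl. f_equal. apply Rinv_1.
  - intros x [a [b [Ha [Hb [_ ->]]]]]. apply D2_lb. apply bd_D2; auto.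
  - exists m0, q0. split; [apply bd_D2_m|split;[apply bd_D2_q|]]. split.
    rewrite distbd_D2, d_z0m0; auto. rewrite Q_m0q0; auto.
Qed.

Lemma circ_facts a : (fst a - 1)^2 + (snd a)^2 = 1/25 ->
  4/5 <= fst a <= 6/5 /\ 4/5 <= dist2 z0 a /\ dist2 z0 a * dist2 z0 a = 2 * fst a - 24/25.
Proof.
  intro H. pose proof (pow2_ge_0 (snd a)). pose proof (d0 a). pose proof (d_nn z0 a).
  assert (4/5 <= fst a <= 6/5) by (split; nra).
  assert (E : dist2 z0 a * dist2 z0 a = 2 * fst a - 24/25) by (rewrite H1; nra).
  split; auto. split; auto. apply sq_le; nra.
Qed.

Lemma circ_pair a b : (fst a - 1)^2 + (snd a)^2 = 1/25 -> (fst b - 1)^2 + (snd b)^2 = 1/25 ->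
  dist2 a b <= 2/5.
Proof.
  intros Ha Hb. pose proof (d_sq a b). pose proof (d_nn a b).
  assert (dist2 a b * dist2 a b <= 4/25).
  { rewrite H. pose proof (pow2_ge_0 ((fst a - 1) + (fst b - 1))).
    pose proof (pow2_ge_0 (snd a + snd b)). nra. }
  apply sq_le; nra.
Qed.

Lemma distbd_D1 : dist_bd D1 z0 = Finite (4/5).
Proof.
  unfold dist_bd. apply glb_exact.
  - intros x [a [Ha ->]]. simpl. destruct (bd_D1 _ Ha) as [C|C].
    + destruct (circ_facts _ C) as [_ [h _]]; lra.
    + subst; rewrite d_z0q0; lra.
  - exists a0. split; [apply bd_D1_a0|]. rewrite d_z0a0; auto.
Qed.

Lemma D1'_lb x : (exists a b, boundary2 D1 a /\ boundary2 D1 b /\ x = Qf z0 a b) ->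
  Rbar_le (Finite (101/100)) x.
Proof.
  intros [a [b [Ha [Hb ->]]]]. apply Q_ge. intro Hab.
  destruct (bd_D1 _ Ha) as [Ca|Ca].
  - destruct (circ_facts _ Ca) as [[hx1 hx2] [hr Er]]. split; [lra|].
    destruct (bd_D1 _ Hb) as [Cb|Cb].
    + right; right. pose proof (circ_pair _ _ Ca Cb). lra.
    + subst b. destruct (Rle_lt_dec 1 (fst a)).
      * left. apply sq_le; [lra|apply d_nn|lra].
      * right; left. pose proof (d0 a). pose proof (dq a). pose proof (d_nn z0 a). pose proof (d_nn a q0).
        apply (key (fst a) (snd a)); auto.
  - subst a. rewrite d_z0q0. split; [lra|]. left; lra.
Qed.

Lemma D1''_lb x : (exists a b, boundary2 D1 a /\ boundary2 D1 b /\
     Finite (dist2 z0 a) = dist_bd D1 z0 /\ x = Qf z0 a b) ->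
  Rbar_le (Finite (16/15)) x.
Proof.
  intros [a [b [Ha [Hb [Hd ->]]]]]. rewrite distbd_D1 in Hd. injection Hd as Hd.
  assert (a = a0).
  { destruct (bd_D1 _ Ha) as [Ca|Ca].
    - destruct (circ_facts _ Ca) as [[hx1 hx2] [hr Er]]. rewrite Hd in Er.
      assert (fst a = 4/5) by lra. assert (snd a = 0) by (apply sq0; pose proof (pow2_ge_0 (snd a)); nra).
      destruct a; cbn [fst snd] in *; subst; reflexivity.
    - subst a. rewrite d_z0q0 in Hd. lra. }
  subst a. apply Q_ge. intro Hab. rewrite d_z0a0. split; [lra|].
  destruct (bd_D1 _ Hb) as [Cb|Cb].
  - right; right. assert (Ca : (fst a0 - 1)^2 + (snd a0)^2 = 1/25) by (unfold a0; cbn [fst snd]; field).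
    pose proof (circ_pair _ _ Ca Cb). lra.
  - subst b. rewrite d_a0q0. right; left. lra.
Qed.

Lemma Q_fin z a b : a <> b -> Qf z a b = Finite (dist2 z a * (1 + Rabs (ln (dist2 a b / dist2 z a)))).
Proof. intro H. unfold Qf. destruct (excluded_middle_informative (a = b)); [contradiction|auto]. Qed.

Lemma inv_lt a b : 0 < a -> a < b -> / b < / a.
Proof. intros. apply Rinv_lt_contravar; nra. Qed.

Theorem lemma5 :
  exists (D1 D2 : pt -> Prop) (z : pt),
    domain2 D1 /\ domain2 D2 /\ (forall w, D1 w -> D2 w) /\
    (exists p q : pt, p <> q /\ ~ D2 p /\ ~ D2 q) /\
    D1 z /\
    lam D2 z = lam'' D2 z /\ lam'' D2 z = lam' D2 z /\
    Rbar_lt (lam' D1 z) (lam' D2 z) /\ Rbar_lt (lam'' D1 z) (lam' D1 z) /\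
    Rbar_lt (lam' D1 z) (lam' D2 z) /\ Rbar_lt (lam'' D1 z) (lam'' D2 z).
Proof.
  assert (a0q0 : a0 <> q0) by (unfold a0, q0; apply pair_neq1; lra).
  destruct (glb_fin (fun q => exists a b, boundary2 D1 a /\ boundary2 D1 b /\ q = Qf z0 a b)
     (101/100) (dist2 z0 a1) D1'_lb) as [g [Hg [Hg1 Hg2]]].
  { exists a1, q0. split; [apply bd_D1_a1|split; [apply bd_D1_q|]]. rewrite Q_a1q0; auto. }
  destruct (glb_fin (fun q => exists a b, boundary2 D1 a /\ boundary2 D1 b /\
     Finite (dist2 z0 a) = dist_bd D1 z0 /\ q = Qf z0 a b)
     (16/15) (dist2 z0 a0 * (1 + Rabs (ln (dist2 a0 q0 / dist2 z0 a0)))) D1''_lb) as [h [Hh [Hh1 Hh2]]].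
  { exists a0, q0. split; [apply bd_D1_a0|split; [apply bd_D1_q|]].
    split. rewrite distbd_D1, d_z0a0; auto. rewrite Q_fin; auto. }
  assert (HU : dist2 z0 a1 < 16/15).
  { apply sq_lt; [apply d_nn|lra|]. rewrite d_z0a1. lra. }
  assert (E1 : lam' D1 z0 = Finite (/ g)) by (unfold lam'; rewrite Hg; reflexivity).
  assert (E2 : lam'' D1 z0 = Finite (/ h)) by (unfold lam''; rewrite Hh; reflexivity).
  exists D1, D2, z0.
  split; [apply D1_dom|]. split; [apply D2_dom|].
  split. { intros w [Hw1 Hw2]. split; auto. intro E; subst w. unfold m0 in Hw1; cbn [fst snd] in Hw1. lra. }
  split. { exists m0, q0. split; [apply m0q0|]. unfold D2; split; tauto. }
  split. { unfold D1, z0, q0; cbn [fst snd]. split. lra. apply pair_neq1; lra. }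
  rewrite E1, E2, lam_D2, lam''_D2, lam'_D2. simpl.
  assert (/ g < 1) by (rewrite <- Rinv_1; apply inv_lt; lra).
  assert (/ h < / g) by (apply inv_lt; lra).
  repeat split; auto; lra.
Qed.
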